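(* Let $f_{\phi}:\mathbb{R}^D\to\mathbb{R}^H$ be the encoder of a Natural Posterior Network model, given by a neural network with piecewise (leaky) ReLU activations, so that $f_{\phi}$ is continuous and piecewise affine: there is a finite collection of affine regions $Q^{(1)},\dots,Q^{(R)}$ covering $\mathbb{R}^D$ such that $f_{\phi}(\mathbf{x}) = V^{(l)}\mathbf{x} + a^{(l)}$ for $\mathbf{x}\in Q^{(l)}$, with $V^{(l)}\in\mathbb{R}^{H\times D}$ and $a^{(l)}\in\mathbb{R}^H$. Suppose that every matrix $V^{(l)}$ has linearly independent rows. Let $\mathbb{P}(\mathbf{z}\mid\boldsymbol{\omega})$ be a probability density function on the latent space $\mathbb{R}^H$ which has bounded derivatives. Then for almost every $\mathbf{x}\in\mathbb{R}^D$, $$\mathbb{P}(f_{\phi}(\delta\cdot\mathbf{x})\mid\boldsymbol{\omega}) \longrightarrow 0 \quad\text{as } \delta\to\infty .$$ In particular, the predicted evidence $n(\delta\mathbf{x}) = N_H\,\mathbb{P}(f_{\phi}(\delta\mathbf{x})\mid\boldsymbol{\omega})$ (for any constant $N_H>0$) tends to $0$ as $\delta\to\infty$.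
   Context: A Natural Posterior Network consists of an encoder $f_{\phi}$ mapping an input $\mathbf{x}\in\mathbb{R}^D$ to a latent vector $\mathbf{z}=f_{\phi}(\mathbf{x})\in\mathbb{R}^H$, a decoder $g_{\psi}$ (which plays no role in this statement), and a normalized density $\mathbb{P}(\mathbf{z}\mid\boldsymbol{\omega})$ on $\mathbb{R}^H$ (e.g. a normalizing flow). For an input $\mathbf{x}$, the evidence (pseudo-count) is defined as $n = N_H\,\mathbb{P}(f_{\phi}(\mathbf{x})\mid\boldsymbol{\omega})$ with a fixed constant $N_H>0$ (the certainty budget). *)

(* Defs.v *)
From HB Require Import structures.
From mathcomp Require Import all_boot all_order all_algebra.
From mathcomp Require Import all_classical all_reals all_analysis.
Set Implicit Arguments. Unset Strict Implicit. Unset Printing Implicit Defensive.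
Import Order.TTheory GRing.Theory Num.Theory.
Import numFieldNormedType.Exports.
Local Open Scope classical_set_scope.
Local Open Scope ring_scope.

Definition box (R : realType) (n : nat) (a b : 'cV[R]_n) : set 'cV[R]_n :=
  [set x | forall i : 'I_n, a i ord0 <= x i ord0 <= b i ord0].

(* volume of the box [a,b] (assuming a <= b componentwise) *)
Definition box_vol (R : realType) (n : nat) (a b : 'cV[R]_n) : R :=
  \prod_(i < n) (b i ord0 - a i ord0).

Definition lebesgue_outer (R : realType) (n : nat) (A : set 'cV[R]_n) : \bar R :=
  ereal_inf [set s | exists a b : nat -> 'cV[R]_n,
     (forall k (i : 'I_n), a k i ord0 <= b k i ord0) /\
     A `<=` \bigcup_k box (a k) (b k) /\
     s = (\sum_(k <oo) (box_vol (a k) (b k))%:E)%E].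

Definition lebesgue_null (R : realType) (n : nat) (N : set 'cV[R]_n) : Prop :=
  lebesgue_outer N = 0%E.

(* Lebesgue integral over R^n of a nonnegative function, via the layer-cake
   formula  \int g = \int_0^oo lambda_n({g > t}) dt *)
Definition lebesgue_integral_nonneg (R : realType) (n : nat)
    (g : 'cV[R]_n -> R) : \bar R :=
  (\int[@lebesgue_measure R]_(t in `[0%R, +oo[%classic)
      lebesgue_outer [set z | (t < g z)%R])%E.

Definition is_pdf (R : realType) (n : nat) (P : 'cV[R]_n -> R) : Prop :=
  (forall z, 0 <= P z) /\ lebesgue_integral_nonneg P = 1%E.

Definition bounded_derivative (R : realType) (n : nat) (P : 'cV[R]_n -> R) : Prop :=
  (forall z, differentiable P z) /\
  exists M : R, forall z v : 'cV[R]_n, `|'D_v P z| <= M * `|v|.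

Definition piecewise_affine (R : realType) (D H r : nat)
    (f : 'cV[R]_D -> 'cV[R]_H) (Q : 'I_r -> set 'cV[R]_D)
    (V : 'I_r -> 'M[R]_(H, D)) (a : 'I_r -> 'cV[R]_H) : Prop :=
  (forall x, exists l, Q l x) /\
  (forall l x, Q l x -> f x = V l *m x + a l).

(* Main.v *)
Require Import Defs.
From HB Require Import structures.
From mathcomp Require Import all_boot all_order all_algebra.
From mathcomp Require Import all_classical all_reals all_analysis.
From mathcomp Require Import ring lra.
Import Order.TTheory GRing.Theory Num.Theory.
Import numFieldNormedType.Exports.
Local Open Scope classical_set_scope.
Local Open Scope ring_scope.
Local Open Scope ereal_scope.

Section Outer.
Variables (R : realType) (n : nat).
Implicit Types A B : set 'cV[R]_n.

Lemma vol_ge0 (a b : 'cV[R]_n) : (forall i, a i ord0 <= b i ord0)%R ->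
  (0 <= box_vol a b)%R.
Proof. by move=> h; apply: prodr_ge0 => i _; rewrite subr_ge0. Qed.

Lemma outer_ge0 A : 0 <= lebesgue_outer A.
Proof.
apply: le_ereal_inf_tmp => _ [a [b [h [_ ->]]]].
by apply: nneseries_ge0 => k _ _; rewrite lee_fin vol_ge0.
Qed.

Lemma outer_le_cover A (a b : nat -> 'cV[R]_n) :
  (forall k i, (a k i ord0 <= b k i ord0)%R) ->
  A `<=` \bigcup_k box (a k) (b k) ->
  lebesgue_outer A <= \sum_(k <oo) (box_vol (a k) (b k))%:E.
Proof. by move=> h1 h2; apply: ereal_inf_lbound; exists a, b. Qed.

Lemma outer_mono A B : A `<=` B -> lebesgue_outer A <= lebesgue_outer B.
Proof.
move=> AB; apply: le_ereal_inf => _ [a [b [h [hB ->]]]].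
by exists a, b; split => //; split => //; apply: subset_trans hB.
Qed.

Lemma null_sub A B : A `<=` B -> lebesgue_null B -> lebesgue_null A.
Proof.
move=> AB nB; apply/eqP; rewrite eq_le outer_ge0 andbT.
by rewrite -nB outer_mono.
Qed.

Lemma null_of_eps A : (forall e : R, (0 < e)%R -> exists a b : nat -> 'cV[R]_n,
   (forall k i, (a k i ord0 <= b k i ord0)%R) /\
   A `<=` \bigcup_k box (a k) (b k) /\
   \sum_(k <oo) (box_vol (a k) (b k))%:E <= e%:E) -> lebesgue_null A.
Proof.
move=> h; apply/eqP; rewrite eq_le outer_ge0 andbT.
apply/lee_addgt0Pr => e e0; rewrite add0e.
have [a [b [h1 [h2 h3]]]] := h e e0.
exact: le_trans (@outer_le_cover A a b h1 h2) h3.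
Qed.

Lemma null_bigcup (A : nat -> set 'cV[R]_n) :
  (forall m, lebesgue_null (A m)) -> lebesgue_null (\bigcup_m A m).
Proof.
move=> hA; apply: null_of_eps => e e0.
have hc m : exists ab : (nat -> 'cV[R]_n) * (nat -> 'cV[R]_n),
   (forall k i, (ab.1 k i ord0 <= ab.2 k i ord0)%R) /\
   A m `<=` \bigcup_k box (ab.1 k) (ab.2 k) /\
   \sum_(k <oo) (box_vol (ab.1 k) (ab.2 k))%:E <= (e / (2 ^ m.+1)%:R)%:E.
  have : lebesgue_outer (A m) < (e / (2 ^ m.+1)%:R)%:E.
    by rewrite hA lte_fin divr_gt0 // ltr0n expn_gt0.
  move=> /ereal_inf_lt [_ [a [b [h1 [h2 ->]]]]] h3.
  by exists (a, b); split => //; split => //; apply: ltW.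
have [ab hab] := choice hc.
have [g gbij] : exists g : nat -> nat * nat, set_bij setT setT g.
  by apply/card_set_bijP; apply: card_esym; exact: card_nat2.
exists (fun k => (ab (g k).1).1 (g k).2), (fun k => (ab (g k).1).2 (g k).2).
split; first by move=> k i; case: (hab (g k).1) => + _; apply.
split.
  move=> x [m _ Amx]; have [_ [/(_ x Amx) [k _ hk] _]] := hab m.
  have [_ _ gsurj] := gbij.
  have [j _ gj] := gsurj (m, k) I.
  by exists j => //; rewrite gj.
pose u (p : nat * nat) := (box_vol ((ab p.1).1 p.2) ((ab p.1).2 p.2))%:E.
have u0 p : 0 <= u p by rewrite lee_fin vol_ge0 //; case: (hab p.1).
rewrite (_ : \sum_(k <oo) _ = \sum_(k <oo) u (g k)) //.
rewrite nneseries_esumT // -(reindex_esum setT setT g u gbij).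
rewrite (_ : [set: nat * nat] = setT `*`` (fun=> setT)); last first.
  by apply/seteqP; split => -[] //.
rewrite -(@esum_esum _ _ _ setT (fun=> setT) (fun i j => u (i, j))) //.
apply: (le_trans _ (epsilon_trick0 xpredT (ltW e0))).
rewrite nneseries_esumT; last by move=> m; rewrite lee_fin divr_ge0 // ltW.
apply: le_esum => m _.
rewrite -nneseries_esumT //; case: (hab m) => _ [_] /=.
by rewrite /u /=.
Qed.

End Outer.
Lemma ge0_le_integral_nm d (T : measurableType d) (R : realType)
  (mu : {measure set T -> \bar R}) (D : set T) (f g : T -> \bar R) :
  (forall x, D x -> 0 <= f x)%E -> (forall x, D x -> f x <= g x)%E ->
  (\int[mu]_(x in D) f x <= \int[mu]_(x in D) g x)%E.
Proof.
move=> f0 fg.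
have g0 x : D x -> (0 <= g x)%E by move=> Dx; exact: le_trans (f0 _ Dx) (fg _ Dx).
rewrite !ge0_integralE//; apply: le_ereal_sup => _ [h hf <-]; exists h => //=.
move=> x; apply: le_trans (hf x) _; rewrite /patch; case: ifP => // /set_mem.
exact: fg.
Qed.

Section Iter.
Variables (R : realType) (n : nat).

Definition upd (x : 'cV[R]_n) (k : nat) (t : R) : 'cV[R]_n :=
  \col_i (if (i : nat) == k then t else x i ord0).

Fixpoint Iter (k : nat) (g : 'cV[R]_n -> \bar R) : 'cV[R]_n -> \bar R :=
  match k with
  | 0 => g
  | k'.+1 => fun x => (\int[@lebesgue_measure R]_(t in setT) Iter k' g (upd x k' t))%E
  end.

Definition indr (a b y : 'cV[R]_n) : R :=
  \prod_(i < n) (a i ord0 <= y i ord0 <= b i ord0)%R%:R.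

Definition form (k : nat) (a b y : 'cV[R]_n) : R :=
  \prod_(i < n) (if (i < k)%N then b i ord0 - a i ord0
                 else (a i ord0 <= y i ord0 <= b i ord0)%R%:R).

Lemma form0 (a b y : 'cV[R]_n) : form 0 a b y = indr a b y.
Proof. by []. Qed.

Lemma form_ge0 k (a b y : 'cV[R]_n) : (forall i, a i ord0 <= b i ord0)%R -> (0 <= form k a b y)%R.
Proof.
move=> h; apply: prodr_ge0 => i _; case: ifP => _; first by rewrite subr_ge0.
by rewrite ler0n.
Qed.

Lemma form_upd k (ko : 'I_n) (a b x : 'cV[R]_n) (t : R) : (ko : nat) = k ->
  let C := (\prod_(i < n | i != ko) (if (i < k)%N then b i ord0 - a i ord0
                 else (a i ord0 <= x i ord0 <= b i ord0)%R%:R))%R in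
  form k a b (upd x k t) = (C * (a ko ord0 <= t <= b ko ord0)%R%:R)%R /\
  form k.+1 a b x = (C * (b ko ord0 - a ko ord0))%R.
Proof.
move=> hk C; rewrite /form; split.
  rewrite (bigD1 ko) //= hk ltnn mulrC.
  rewrite /upd mxE hk eqxx; congr (_ * _)%R; apply: eq_bigr => i hi.
  have hi' : ((i : nat) == k) = false by rewrite -hk; exact: negPf hi.
  by rewrite mxE hi'.
rewrite (bigD1 ko) //= hk ltnSn mulrC.
congr (_ * _)%R; apply: eq_bigr => i hi.
have hi' : ((i : nat) == k) = false by rewrite -hk; exact: negPf hi.
by rewrite ltnS leq_eqVlt hi'.
Qed.

Lemma Iter_series (w : nat -> R) (a b : nat -> 'cV[R]_n) k :
  (forall j, 0 <= w j)%R -> (forall j i, a j i ord0 <= b j i ord0)%R ->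
  (k <= n)%N -> forall x,
  Iter k (fun y => \sum_(j <oo) (w j * indr (a j) (b j) y)%:E)%E x =
  (\sum_(j <oo) (w j * form k (a j) (b j) x)%:E)%E.
Proof.
move=> w0 ab; elim: k => [|k IH] kn x //=.
have kn' : (k < n)%N by [].
pose ko := Ordinal kn'.
have IH' := IH (ltnW kn').
under eq_integral do rewrite IH'.
rewrite integral_nneseries //; last first.
- move=> j t _; rewrite lee_fin mulr_ge0 // form_ge0 //.
- move=> j.
  have -> : (fun t => (w j * form k (a j) (b j) (upd x k t))%:E) =
    (fun t => ((w j * \prod_(i < n | i != ko) (if (i < k)%N then b j i ord0 - a j i ord0
                 else (a j i ord0 <= x i ord0 <= b j i ord0)%R%:R)) *
         \1_(`[a j ko ord0, b j ko ord0]%classic : set R) t)%:E).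
    apply/funext => t; have [-> _] := @form_upd k ko (a j) (b j) x t erefl.
    rewrite indicE mulrA.
    by have -> : (t \in (`[a j ko ord0, b j ko ord0]%classic : set R)) = (a j ko ord0 <= t <= b j ko ord0)%R
      by apply/idP/idP; rewrite in_setE /= in_itv.
  apply/measurable_realfun.measurable_EFinP; apply: measurable_realfun.measurable_funM => //.
apply: eq_eseriesr => j _.
have [_ ->] := @form_upd k ko (a j) (b j) x 0 erefl.
set C := (\prod_(i < n | i != ko) _)%R.
have C0 : (0 <= w j * C)%R.
  rewrite mulr_ge0 // prodr_ge0 // => i _; case: ifP => _; last by rewrite ler0n.
  by rewrite subr_ge0.
under eq_integral => t _.
  have [-> _] := @form_upd k ko (a j) (b j) x t erefl.
  rewrite mulrA.
  have -> : (a j ko ord0 <= t <= b j ko ord0)%R%:R = \1_(`[a j ko ord0, b j ko ord0]%classic : set R) t.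
    rewrite /indic.
    by have -> : (t \in (`[a j ko ord0, b j ko ord0]%classic : set R)) = (a j ko ord0 <= t <= b j ko ord0)%R
      by apply/idP/idP; rewrite in_setE /= in_itv.
  over.
under eq_integral do rewrite EFinM.
rewrite ge0_integralZl_EFin //; last first.
  apply/measurable_realfun.measurable_EFinP.
  exact: measurable_realfun.measurable_indic.
rewrite integral_indic // setIT.
have hm : (@lebesgue_measure R (`[a j ko ord0, b j ko ord0]%classic : set R)) = (b j ko ord0 - a j ko ord0)%:E.
  rewrite lebesgue_measure_itv /= lte_fin.
  case: ltgtP (ab j ko) => //= h _.
  by rewrite h subrr.
transitivity ((w j * C)%:E * (b j ko ord0 - a j ko ord0)%:E)%E.
  by congr (_ * _)%E; exact: hm.
by rewrite -EFinM mulrA.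
Qed.


Lemma Iter_ge0 k (g : 'cV[R]_n -> \bar R) : (forall y, 0 <= g y)%E -> forall x, (0 <= Iter k g x)%E.
Proof.
move=> g0; elim: k => [|k IH] x //=.
by apply: integral_ge0 => t _; exact: IH.
Qed.

Lemma Iter_le k (g h : 'cV[R]_n -> \bar R) : (forall y, 0 <= g y)%E ->
  (forall y, g y <= h y)%E -> forall x, (Iter k g x <= Iter k h x)%E.
Proof.
move=> g0 gh; elim: k => [|k IH] x //=.
apply: ge0_le_integral_nm => t _; last exact: IH.
exact: Iter_ge0.
Qed.

Lemma form_n (a b x : 'cV[R]_n) : form n a b x = box_vol a b.
Proof. by rewrite /form /box_vol; apply: eq_bigr => i _; rewrite ltn_ord. Qed.

Lemma indr_in (a b y : 'cV[R]_n) : box a b y -> indr a b y = 1%R.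
Proof.
by move=> h; rewrite /indr big1 // => i _; rewrite h.
Qed.

Lemma indr_out (a b y : 'cV[R]_n) : ~ box a b y -> indr a b y = 0%R.
Proof.
move=> h; have [i hi] : exists i, ~~ (a i ord0 <= y i ord0 <= b i ord0)%R.
  apply/not_existsP => hn; apply: h => i.
  by have := hn i; case: (_ && _).
by rewrite /indr (bigD1 i) //= (negPf hi) mul0r.
Qed.

Lemma indr_ge0 (a b y : 'cV[R]_n) : (0 <= indr a b y)%R.
Proof. by apply: prodr_ge0 => i _; rewrite ler0n. Qed.

Lemma series_single (f : nat -> \bar R) m0 : (forall k, k != m0 -> f k = 0) ->
  (0 <= f m0)%E -> (\sum_(k <oo) f k = f m0)%E.
Proof.
move=> f0 fm0.
rewrite (@nneseries_split _ f 0 m0.+1); last first.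
  by move=> k _; case: (eqVneq k m0) => [->|/f0 ->].
rewrite eseries0 ?adde0; last first.
  by move=> i hi _; apply: f0; rewrite neq_ltn; apply/orP; right.
rewrite add0n big_nat_recr //= big1_seq ?add0e // => i /andP[_].
by rewrite mem_index_iota => /andP[_ hi]; apply: f0; rewrite neq_ltn hi.
Qed.

Lemma cover_sum_le (K : nat) (c d a b : nat -> 'cV[R]_n) :
  (forall m i, c m i ord0 <= d m i ord0)%R ->
  (forall k i, a k i ord0 <= b k i ord0)%R ->
  (forall m m' y, (m < K)%N -> (m' < K)%N -> box (c m) (d m) y -> box (c m') (d m') y -> m = m') ->
  (forall m, (m < K)%N -> box (c m) (d m) `<=` \bigcup_k box (a k) (b k)) ->
  ((\sum_(m < K) box_vol (c m) (d m))%:E <= \sum_(k <oo) (box_vol (a k) (b k))%:E)%E.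
Proof.
move=> cd ab disj cov.
pose w j : R := ((j < K)%N)%:R.
have w0 j : (0 <= w j)%R by rewrite ler0n.
have e1 := @Iter_series w c d n w0 cd (leqnn n) (const_mx 0%R).
have e2 := @Iter_series (fun=> 1%R) a b n (fun=> ler01) ab (leqnn n) (const_mx 0%R).
have hle := @Iter_le n (fun y => \sum_(j <oo) (w j * indr (c j) (d j) y)%:E)%E
   (fun y => \sum_(j <oo) (1 * indr (a j) (b j) y)%:E)%E.
have H0 : forall y, (0 <= \sum_(j <oo) (w j * indr (c j) (d j) y)%:E)%E.
  by move=> y; apply: nneseries_ge0 => j _ _; rewrite lee_fin mulr_ge0 // indr_ge0.
have H1 : forall y, (\sum_(j <oo) (w j * indr (c j) (d j) y)%:E <=
     \sum_(j <oo) (1 * indr (a j) (b j) y)%:E)%E.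
  move=> y.
  have [[m0 m0K hm0]|hno] := pselect (exists2 m0, (m0 < K)%N & box (c m0) (d m0) y).
    rewrite (@series_single _ m0); last 2 first.
    + move=> k hk; rewrite /w; case: ltnP => hkK; last by rewrite mul0r.
      rewrite indr_out ?mulr0 // => hb; move/eqP: hk; apply.
      exact: disj hb hm0.
    + by rewrite lee_fin mulr_ge0 // indr_ge0.
    rewrite /w m0K mul1r indr_in //.
    have [k _ hk] := cov m0 m0K y hm0.
    apply: le_trans (nneseries_lim_ge k.+1 _); last by move=> j _ _; rewrite lee_fin mulr_ge0 // indr_ge0.
    rewrite big_nat_recr //= mul1r indr_in // leeDr //.
    by rewrite sume_ge0 // => j _; rewrite lee_fin mul1r indr_ge0.
  rewrite eseries0; last first.
    move=> i _ _; rewrite /w; case: ltnP => hiK; last by rewrite mul0r.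
    by rewrite indr_out ?mulr0 // => hb; apply: hno; exists i.
  by apply: nneseries_ge0 => j _ _; rewrite lee_fin mulr_ge0 // indr_ge0.
have := hle H0 H1 (const_mx 0%R); rewrite e1 e2.
under eq_eseriesr do rewrite form_n.
under [X in (_ <= X)%E -> _]eq_eseriesr do rewrite form_n mul1r.
move=> H; apply: le_trans H.
rewrite (@nneseries_split _ _ 0 K); last by move=> k _; rewrite lee_fin mulr_ge0 // vol_ge0.
rewrite eseries0 ?adde0; last by move=> i hi _; rewrite /w ltnNge hi mul0r.
rewrite add0n big_mkord sumEFin lee_fin; apply: ler_sum => i _.
by rewrite /w ltn_ord mul1r.
Qed.

Lemma outer_ge_disjoint (K : nat) (c d : nat -> 'cV[R]_n) :
  (forall m i, c m i ord0 <= d m i ord0)%R ->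
  (forall m m' y, (m < K)%N -> (m' < K)%N -> box (c m) (d m) y -> box (c m') (d m') y -> m = m') ->
  ((\sum_(m < K) box_vol (c m) (d m))%:E <=
    lebesgue_outer (\bigcup_(m in [set m | (m < K)%N]) box (c m) (d m)))%E.
Proof.
move=> cd disj; apply: le_ereal_inf_tmp => _ [a [b [hab [hcov ->]]]].
apply: cover_sum_le => // m mK y hy; apply: hcov; by exists m.
Qed.

End Iter.
Local Close Scope ereal_scope.
Lemma aux_field (R : realType) (C h : R) (n K : nat) : (0 < K)%N ->
  (2 * C * h * h ^+ n * K%:R ^+ n = (2 * C * ((h * K%:R) * (h*K%:R) ^+ n)) / K%:R)%R.
Proof. move=> k0; rewrite exprMn; field; by rewrite pnatr_eq0 -lt0n. Qed.

Section Hyper.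
Variables (R : realType) (D' : nat).
Local Notation D := D'.+1.

Definition piece (w : 'cV[R]_D) (j : 'I_D) (M : R) : set 'cV[R]_D :=
  [set x | (\sum_k w k ord0 * x k ord0 = 0)%R /\ forall k, k != j -> (`|x k ord0| <= M)%R].

Definition lo_ (K : nat) (j : 'I_D) (M h : R) (p : {ffun 'I_D' -> 'I_K}) (k : 'I_D) : R :=
  if unlift j k is Some i then (- M + h * (p i)%:R)%R else 0%R.

Lemma piece_null (w : 'cV[R]_D) (j : 'I_D) (M : R) :
  w j ord0 != 0%R -> (0 < M)%R -> lebesgue_null (piece w j M).
Proof.
move=> wj0 M0; apply: null_of_eps => e e0.
pose c k := (- w k ord0 / w j ord0)%R.
pose C := (\sum_k `|c k|)%R.
have C0 : (0 <= C)%R by apply: sumr_ge0 => k _.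
pose X := (2 * C * (2 * M) ^+ D / e)%R.
have X0 : (0 <= X)%R.
  rewrite /X; apply: divr_ge0; last exact: ltW.
  apply: mulr_ge0; first by apply: mulr_ge0.
  by apply: exprn_ge0; apply: mulr_ge0 => //; exact: ltW.
pose K' := Num.trunc X.
pose K := K'.+1.
have XK : (X < K%:R)%R by exact: truncnS_gt.
have K0 : (0 < K%:R :> R)%R by rewrite ltr0n.
pose h := (2 * M / K%:R)%R.
have h0 : (0 < h)%R by rewrite /h divr_gt0 // mulr_gt0.
pose T := {ffun 'I_D' -> 'I_K}.
pose lo := @lo_ K j M h.
pose cen (p : T) := (\sum_k c k * lo p k)%R.
pose A (p : T) : 'cV[R]_D := \col_k (if k == j then cen p - C * h else lo p k)%R.
pose B (p : T) : 'cV[R]_D := \col_k (if k == j then cen p + C * h else lo p k + h)%R.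
pose s := enum T.
pose aq q := nth 0 [seq A p | p <- s] q.
pose bq q := nth 0 [seq B p | p <- s] q.
have AB p i : (A p i ord0 <= B p i ord0)%R.
  rewrite !mxE; case: ifP => _; last by rewrite lerDl ltW.
  by rewrite lerD2l (le_trans _ (mulr_ge0 C0 (ltW h0))) // oppr_le0 mulr_ge0 // ltW.
have aqE q : (q < size s)%N -> exists p, aq q = A p /\ bq q = B p.
  move=> qs; exists (nth [ffun=> ord0] s q).
  by split; rewrite /aq /bq (nth_map [ffun=> ord0]).
have aqE' q : (size s <= q)%N -> aq q = 0 /\ bq q = 0.
  by move=> qs; split; rewrite /aq /bq nth_default // size_map.
have volAB p : box_vol (A p) (B p) = (2 * C * h * h ^+ D')%R.
  rewrite /box_vol (bigD1 j) //= !mxE eqxx.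
  rewrite (eq_bigr (fun _ => h)); last first.
    by move=> i /negPf hi; rewrite !mxE hi addrAC subrr add0r.
  rewrite prodr_const cardC1 card_ord /=.
  by congr (_ * _)%R; ring.
have abq k i : (aq k i ord0 <= bq k i ord0)%R.
  case: (ltnP k (size s)) => ks.
    by have [p [-> ->]] := aqE k ks; exact: AB.
  by have [-> ->] := aqE' k ks; rewrite mxE.
exists aq, bq; split => //.
split.
  move=> x [hx hb].
  pose p : T := [ffun i => inord (minn (Num.trunc ((x (lift j i) ord0 + M) / h)) K')].
  have ps : (index p s < size s)%N by rewrite index_mem mem_enum.
  exists (index p s) => //.
  have -> : aq (index p s) = A p by rewrite /aq (nth_map p) // nth_index // mem_enum.
  have -> : bq (index p s) = B p by rewrite /bq (nth_map p) // nth_index // mem_enum.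
  have hk k : k != j -> (lo p k <= x k ord0 <= lo p k + h)%R.
    case: (unliftP j k) => [i ->|->]; last by rewrite eqxx.
    move=> _; rewrite /lo /lo_ liftK ffunE inordK; last by rewrite ltnS geq_minr.
    set tt := ((x (lift j i) ord0 + M) / h)%R.
    have hx1 : (`|x (lift j i) ord0| <= M)%R by apply: hb; rewrite eq_sym neq_lift.
    move: hx1; rewrite ler_norml => /andP[hx1 hx2].
    have tt0 : (0 <= tt)%R by apply: divr_ge0; [lra | exact: ltW h0].
    have ttK : (tt <= K%:R)%R.
      rewrite /tt ler_pdivrMr // /h mulrC divfK ?gt_eqF //; lra.
    have ex : x (lift j i) ord0 = (- M + h * tt)%R.
      by rewrite /tt mulrC divfK ?gt_eqF //; ring.
    have q1 : ((minn (Num.trunc tt) K')%:R <= tt)%R.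
      apply: le_trans (_ : (Num.trunc tt)%:R <= tt)%R; last by rewrite truncn_le.
      by rewrite ler_nat geq_minl.
    have q2 : (tt <= (minn (Num.trunc tt) K')%:R + 1)%R.
      case: (leqP (Num.trunc tt) K') => htK.
        by apply: ltW; rewrite natr1; exact: truncnS_gt.
      by rewrite natr1.
    rewrite ex; apply/andP; split.
      by rewrite lerD2l ler_pM2l.
    by rewrite -addrA lerD2l -[X in (_ + X)%R]mulr1 -mulrDr ler_pM2l.
  have lj : lo p j = 0%R by rewrite /lo /lo_ unlift_none.
  have sc : (\sum_k c k * x k ord0 = 0)%R.
    rewrite /c; under eq_bigr do rewrite !mulNr mulrAC.
    by rewrite sumrN -mulr_suml hx mul0r oppr0.
  have cj : c j = (-1)%R by rewrite /c mulNr divff.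
  have xc : (x j ord0 - cen p = \sum_(k | k != j) c k * (x k ord0 - lo p k))%R.
    have e1 : (\sum_k c k * (x k ord0 - lo p k) = - cen p)%R.
      by under eq_bigr do rewrite mulrBr; rewrite sumrB sc sub0r.
    have := (bigD1 j isT : (\sum_k c k * (x k ord0 - lo p k) = c j * (x j ord0 - lo p j) + \sum_(k | k != j) c k * (x k ord0 - lo p k))%R).
    rewrite e1 cj lj subr0.
    move: (cen p) (\sum_(k | k != j) c k * (x k ord0 - lo p k))%R => u v.
    move=> H; lra.
  have bnd : (`|x j ord0 - cen p| <= C * h)%R.
    rewrite xc; apply: le_trans (ler_norm_sum _ _ _) _.
    apply: le_trans (_ : \sum_(k | k != j) `|c k| * h <= _)%R.
      apply: ler_sum => k kj; rewrite normrM ler_wpM2l //.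
      have /andP[l1 l2] := hk k kj.
      by rewrite ger0_norm ?subr_ge0 //; lra.
    rewrite /C mulr_suml [X in (_ <= X)%R](bigD1 j) //= lerDr.
    by rewrite mulr_ge0 // ltW.
  move=> k; rewrite !mxE; case: eqP => [->|/eqP kj]; last exact: hk.
  by rewrite -ler_distl.
rewrite (@nneseries_split _ _ 0 (size s)); last by move=> k _; rewrite lee_fin vol_ge0.
rewrite eseries0 ?adde0; last first.
  move=> k ks _; have [-> ->] := aqE' k ks.
  by rewrite /box_vol (bigD1 j) //= !mxE subrr mul0r.
rewrite add0n (eq_big_nat _ _ (F2 := fun=> (2 * C * h * h ^+ D')%:E)); last first.
  by move=> k /andP[_ ks]; have [p [-> ->]] := aqE k ks; rewrite volAB.
rewrite sumEFin lee_fin sumr_const_nat subn0 /s -cardE card_ffun !card_ord.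
rewrite -[_ *+ (K ^ D')%N]mulr_natr natrX.
have hK : (h * K%:R = 2 * M)%R by rewrite /h divfK // gt_eqF.
rewrite aux_field // -exprS hK.
rewrite ler_pdivrMr //; apply: ltW.
by rewrite -ltr_pdivrMl // mulrC.
Qed.

End Hyper.
Lemma lipschitz_of_bd (R : realType) (n : nat) (P : 'cV[R]_n -> R) :
  bounded_derivative P ->
  exists L : R, 0 < L /\ forall y z, `|P y - P z| <= L * `|y - z|.
Proof.
move=> [dP [M hM]].
exists (Num.max M 1); split; first by rewrite lt_max ltr01 orbT.
move=> y z; set v := y - z.
pose phi (t : R) := P (z + t *: v).
have eqq t : (fun h : R => h^-1 *: ((phi \o shift t) (h *: 1) - phi t)) =
    (fun h : R => h^-1 *: ((P \o shift (z + t *: v)) (h *: v) - P (z + t *: v))).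
  apply/funext => h /=; rewrite /phi -[h%:A]/(h * 1) mulr1 scalerDl.
  by congr (_ *: (P _ - _)); rewrite addrCA.
have hd (t : R) : derivable phi t 1.
  by rewrite /derivable eqq; exact: diff_derivable.
have hder (t : R) : is_derive t (1 : R) phi ('D_v P (z + t *: v)).
  have -> : 'D_v P (z + t *: v) = 'D_1 phi t by rewrite /derive eqq.
  exact: derivableP (hd t).
have hc : {within `[0, 1], continuous phi}.
  apply: continuous_subspaceT => t.
  apply: differentiable_continuous; apply/derivable1_diffP.
  exact: hd.
have [c _ hc2] := MVT_segment ler01 (fun t _ => hder t) hc.
move: hc2; rewrite /phi scale0r addr0 scale1r subr0 mulr1 /v [z + _]addrC subrK => ->.
apply: le_trans (hM _ _) _.
by rewrite ler_wpM2r // le_max lexx.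
Qed.
Local Close Scope ereal_scope.

Lemma box_norm (R : realType) (n : nat) (z y : 'cV[R]_n) (s : R) : 0 <= s ->
  box (z - const_mx s) (z + const_mx s) y -> `|y - z| <= s.
Proof.
move=> s0 hb; rewrite [`|_|]mx_normrE; apply: bigmax_le => // -[i j] _ /=.
rewrite (ord1 j) !mxE; have := hb i; rewrite !mxE => /andP[h1 h2].
by rewrite ler_distl; apply/andP; split; lra.
Qed.

Lemma pdf_vanish (R : realType) (n : nat) (P : 'cV[R]_n -> R) : (0 < n)%N ->
  is_pdf P -> bounded_derivative P ->
  forall e, 0 < e -> exists Rr : R, forall z, Rr < `|z| -> P z < e.
Proof.
move=> n0 [P0 hint] bd e e0; move: hint.
have [L [L0 hL]] := @lipschitz_of_bd R n P bd.
case: (pselect (exists Rr : R, forall z, Rr < `|z| -> P z < e)) => // hno.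
move=> hint; exfalso; move: hint.
have hz Rr : exists z, Rr < `|z| /\ e <= P z.
  apply: contrapT => hc; apply: hno; exists Rr => z hz.
  rewrite ltNge; apply/negP => hez; apply: hc; exists z; split => //.
have [zf hzf] := choice hz.
pose s := e / (2 * L).
have s0 : 0 < s by rewrite /s divr_gt0 // mulr_gt0.
pose zs := fix zs m := if m is m'.+1 then zf (`|zs m'| + 2 * s + 1) else zf 0.
have zs_gt m : `|zs m| + 2 * s < `|zs m.+1|.
  have := (hzf (`|zs m| + 2 * s + 1)).1; rewrite /= => h; lra.
have sep m m' : (m < m')%N -> `|zs m| + 2 * s < `|zs m'|.
  elim: m' => // m' IH; rewrite ltnS leq_eqVlt => /orP[/eqP ->|hm]; first exact: zs_gt.
  apply: lt_trans (IH hm) _; apply: lt_trans (zs_gt m'); lra.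
have Pz m : e <= P (zs m) by case: m => [|m] /=; exact: (hzf _).2.
pose c m := zs m - const_mx s.
pose d m := zs m + const_mx s.
have cd m i : c m i ord0 <= d m i ord0 by rewrite !mxE; lra.
have disj K m m' y : (m < K)%N -> (m' < K)%N -> box (c m) (d m) y -> box (c m') (d m') y -> m = m'.
  move=> _ _ /(@box_norm R n _ _ s (ltW s0)) h1 /(@box_norm R n _ _ s (ltW s0)) h2.
  have h12 : `|zs m - zs m'| <= 2 * s.
    have -> : zs m - zs m' = (y - zs m') - (y - zs m) by rewrite [in RHS]opprB [in RHS]addrC [in RHS]addrA subrK.
    apply: le_trans (ler_normB _ _) _; lra.
  case: (ltngtP m m') => // hm.
  - have := sep _ _ hm; have := ler_normD (zs m) (zs m' - zs m).
    rewrite [zs m + _]addrC subrK.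
    rewrite distrC in h12; move: (`|zs m'|) (`|zs m|) (`|zs m' - zs m|) h12 => u v w h12 h3 h4; exfalso; lra.
  - have := sep _ _ hm; have := ler_normD (zs m') (zs m - zs m').
    rewrite [zs m' + _]addrC subrK.
    move: (`|zs m'|) (`|zs m|) (`|zs m - zs m'|) h12 => u v w h12 h3 h4; exfalso; lra.
have inP m y t : t < e / 2 -> box (c m) (d m) y -> t < P y.
  move=> te /(@box_norm R n _ _ s (ltW s0)) hy.
  have := hL y (zs m); have := Pz m.
  have : L * `|y - zs m| <= L * s by rewrite ler_wpM2l // ltW.
  have -> : L * s = e / 2 by rewrite /s; field; rewrite gt_eqF.
  move=> h1 h2 h3.
  move: h3; rewrite ler_norml => /andP[h3a _].
  move: (L * `|y - zs m|) h1 h3a => u h1 h3a; lra.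
pose V := (2 * s) ^+ n.
have V0 : 0 < V by rewrite exprn_gt0 // mulr_gt0.
pose K := (Num.trunc (1 / (V * (e / 2)))).+1.
have KV : 1 < K%:R * V * (e / 2).
  have h := truncnS_gt (1 / (V * (e / 2))).
  have he : 0 < V * (e / 2) by rewrite mulr_gt0 // divr_gt0.
  by rewrite -mulrA -ltr_pdivrMr // mul1r -[X in X < _]mul1r.
have volcd m : box_vol (c m) (d m) = V.
  rewrite /box_vol (eq_bigr (fun=> 2 * s)); last by move=> i _; rewrite !mxE; ring.
  by rewrite prodr_const card_ord.
have hlow t : `[0, +oo[%classic t ->
    (((K%:R * V) * \1_(`[0, e / 2[%classic : set R) t)%:E <= lebesgue_outer [set z | (t < P z)%R])%E.
  move=> _; rewrite /indic.
  case: (boolP (t \in (`[0, e / 2[%classic : set R))) => ht; last first.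
    by rewrite mulr0 outer_ge0.
  have te : t < e / 2 by move: ht; rewrite in_setE /= in_itv /= => /andP[].
  rewrite /= mulr1n mulr1.
  have := @outer_ge_disjoint R n K c d cd (disj K).
  under eq_bigr do rewrite volcd.
  rewrite sumr_const card_ord => h.
  apply: (@le_trans _ _ (V *+ K)%:E); first by rewrite lee_fin mulr_natl.
  apply: le_trans h _; apply: outer_mono => y [m _ hy].
  exact: inP te hy.
move=> hint.
have f0 t : `[0, +oo[%classic t -> (0 <= ((K%:R * V) * \1_(`[0, e / 2[%classic : set R) t)%:E)%E.
  by move=> _; rewrite lee_fin mulr_ge0 // ?mulr_ge0 ?ler0n // ltW.
have := @ge0_le_integral_nm _ _ R (@lebesgue_measure R) `[0, +oo[%classic _ _ f0 hlow.
rewrite -/(lebesgue_integral_nonneg P) hint.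
under eq_integral do rewrite EFinM.
rewrite ge0_integralZl_EFin //; last 2 first.
- apply/measurable_realfun.measurable_EFinP.
  exact: measurable_realfun.measurable_indic.
- by rewrite mulr_ge0 // ?ler0n // ltW.
rewrite integral_indic // setIidl; last first.
  by move=> t /=; rewrite /= !in_itv /= => /andP[-> _].
have hm : (@lebesgue_measure R (`[0, e / 2[%classic : set R)) = (e / 2)%:E.
  by rewrite lebesgue_measure_itv /= lte_fin divr_gt0 // oppr0 adde0.
move=> H.
have H' : ((K%:R * V)%:E * (e / 2)%:E <= 1)%E by rewrite -hm; exact: H.
by move: H'; rewrite -EFinM lee_fin => H'; move: KV; rewrite ltNge H'.
Qed.

Lemma ker_null (R : realType) (D H : nat) (V : 'M[R]_(H, D)) :
  (0 < H)%N -> row_free V -> lebesgue_null [set x : 'cV[R]_D | V *m x = 0].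
Proof.
move=> H0 rf.
have [i [j hij]] : exists i j, V i j != 0.
  apply: contrapT => hn.
  have V0 : V = 0.
    apply/matrixP => i j; rewrite mxE; apply/eqP; apply/negPn/negP => hv.
    by apply: hn; exists i, j.
  by move: rf; rewrite /row_free V0 mxrank0 eq_sym gtn_eqF.
clear rf; case: D j V hij => [[]//|D'] j V hij.
pose w : 'cV[R]_D'.+1 := \col_k V i k.
have wj : w j ord0 != 0 by rewrite mxE.
apply: (@null_sub R _ _ _ _ (@null_bigcup R _ _ (fun m : nat => @piece_null R D' w j m.+1%:R wj (ltr0Sn _ _)))).
move=> x /= hx; exists (Num.trunc (\sum_k `|x k ord0|)) => //; split.
  move: hx => /matrixP /(_ i ord0); rewrite !mxE => h.
  by apply: eq_trans h; apply: eq_bigr => k _; rewrite /w mxE.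
move=> k _; apply: le_trans (ltW (truncnS_gt _)).
by rewrite (bigD1 k) //= lerDl sumr_ge0.
Qed.

Theorem theorem1 (R : realType) (D H r : nat)
    (f : 'cV[R]_D -> 'cV[R]_H) (Q : 'I_r -> set 'cV[R]_D)
    (V : 'I_r -> 'M[R]_(H, D)) (a : 'I_r -> 'cV[R]_H)
    (P : 'cV[R]_H -> R) :
  (0 < H)%N ->
  continuous f ->
  piecewise_affine f Q V a ->
  (forall l, row_free (V l)) ->
  is_pdf P ->
  bounded_derivative P ->
  exists N : set 'cV[R]_D, lebesgue_null N /\
    forall x, ~ N x ->
      (P (f (d *: x)) @[d --> +oo] --> 0) /\
      (forall NH : R, 0 < NH -> NH * P (f (d *: x)) @[d --> +oo] --> 0).
Proof.
move=> H0 _ [cov aff] rf pdf bd.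
have [l0 _] := cov 0.
exists [set x | exists l, V l *m x = 0]; split.
  pose B (n : nat) := [set x : 'cV[R]_D | exists l : 'I_r, (l : nat) = n /\ V l *m x = 0].
  apply: (@null_sub R _ _ _ _ (@null_bigcup R _ B (fun n => @null_sub R _ _ _ _ (@ker_null R _ _ _ H0 (rf (insubd l0 n)))))).
    by move=> x [l hl]; exists (l : nat) => //; exists l.
  move=> n x [l [<- hl]] /=.
  by rewrite (_ : insubd l0 l = l) //; apply: val_inj; rewrite val_insubd ltn_ord.
move=> x hN.
have hx l : V l *m x != 0 by apply/eqP => h; apply: hN; exists l.
have c1 : P (f (d *: x)) @[d --> +oo] --> 0.
  apply/cvgr0Pnorm_lt => e e0.
  have [Rr hRr] := @pdf_vanish R _ P H0 pdf bd e e0.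
  pose dl l := (`|Rr| + `|a l|) / `|V l *m x|.
  exists (\sum_l `|dl l|); split; first exact: num_real.
  move=> d hd.
  have [l hl] := cov (d *: x).
  rewrite (aff _ _ hl) ger0_norm; last by case: pdf.
  apply: hRr.
  have hV : 0 < `|V l *m x| by rewrite normr_gt0.
  have hdl : dl l < d.
    apply: le_lt_trans hd; apply: le_trans (ler_norm _) _.
    by rewrite (bigD1 l) //= lerDl sumr_ge0.
  have h1 : `|Rr| + `|a l| < d * `|V l *m x|.
    by move: hdl; rewrite /dl ltr_pdivrMr.
  apply: lt_le_trans (lerB_normD _ _).
  rewrite -scalemxAr normrZ.
  have d0 : 0 <= d.
    apply: le_trans (ltW hdl); rewrite /dl divr_ge0 //.
  rewrite ger0_norm //.
  have := ler_norm Rr; lra.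
split => // NH NH0.
by rewrite -(mulr0 NH); apply: cvgMl_tmp.
Qed.
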